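(* Let $C'>1$ and $c_\beta>1$, and suppose $F: (0,\infty) \to [0,\infty)$ satisfies $$F(t) \leq C' \frac{F(t-c_\beta s)}{s}$$ for all $t,s$ with $c_\beta^{-1} t \geq s \geq 1$. If $F(t) \leq 1/t$ for every $t>0$, then there exist constants $c,C>0$ such that $F(t) \leq C \exp(-c t)$ for every $t\geq c_\beta$. *)

(* Defs.v *)
From Stdlib Require Import Reals.

(* Main.v *)
Require Import Defs.
From Stdlib Require Import Reals.
From Stdlib Require Import Lra Lia ZArith.
Open Scope R_scope.

Lemma nat_above (x : R) : 0 <= x -> exists n : nat, x < INR n.
Proof.
  intros hx. destruct (archimed x) as [h1 _].
  assert (hp : (0 < up x)%Z) by (apply lt_0_IZR; lra).
  exists (Z.to_nat (up x)). rewrite INR_IZR_INZ, Z2Nat.id by lia. lra.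
Qed.

Theorem lemma4p1 (C' cb : R) (F : R -> R)
  (hC' : 1 < C') (hcb : 1 < cb)
  (hFnn : forall t, 0 < t -> 0 <= F t)
  (hrec : forall t s, 0 < t -> 1 <= s -> s <= t / cb -> 0 < t - cb * s ->
            F t <= C' * F (t - cb * s) / s)
  (hdecay : forall t, 0 < t -> F t <= 1 / t) :
  exists c C : R, 0 < c /\ 0 < C /\
    forall t, cb <= t -> F t <= C * exp (- (c * t)).
Proof.
  set (s0 := 2 * C').
  set (L := cb * s0).
  assert (hL : 0 < L) by (unfold L, s0; nra).
  set (c := ln 2 / L).
  assert (hln : 0 < ln 2) by (rewrite <- ln_1; apply ln_increasing; lra).
  assert (hc : 0 < c) by (unfold c; apply Rdiv_lt_0_compat; lra).
  assert (hcL : exp (c * L) = 2).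
  { unfold c. replace (ln 2 / L * L) with (ln 2) by (field; lra).
    apply exp_ln; lra. }
  set (C := 2 * exp (c * cb) / cb).
  assert (hC : 0 < C).
  { unfold C. apply Rdiv_lt_0_compat; [|lra]. pose proof (exp_pos (c*cb)); lra. }
  exists c, C. split; [exact hc|]. split; [exact hC|].
  assert (key : forall n : nat, forall t, cb <= t -> t < cb + INR (S n) * L ->
            F t <= C * exp (- (c * t))).
  { induction n as [|n IH]; intros t h1 h2.
    - simpl in h2. replace (1 * L) with L in h2 by ring.
      assert (E : C * exp (- (c * t)) = exp (c * (cb + L) - c * t) / cb).
      { assert (X : exp (c * (cb + L) - c * t) = exp (c * cb) * exp (c * L) * exp (- (c * t))).
        { rewrite <- !exp_plus. f_equal. ring. }
        rewrite X, hcL. unfold C. field. lra. }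
      rewrite E.
      assert (hexp : 1 <= exp (c * (cb + L) - c * t)).
      { rewrite <- exp_0. apply Rlt_le, exp_increasing. nra. }
      eapply Rle_trans. apply hdecay; lra.
      apply Rle_trans with (1 / cb).
      + apply Rmult_le_compat_l; [lra|]. apply Rinv_le_contravar; lra.
      + unfold Rdiv. apply Rmult_le_compat_r; [left; apply Rinv_0_lt_compat; lra|lra].
    - destruct (Rlt_or_le t (cb + L)) as [hlt|hge].
      + apply (IH t h1). rewrite S_INR. pose proof (pos_INR n). nra.
      + assert (hS : 1 <= s0) by (unfold s0; lra).
        assert (hr := hrec t s0 ltac:(lra) hS).
        assert (hr' : F t <= C' * F (t - L) / s0).
        { apply hr.
          - unfold L in hge. apply Rmult_le_reg_r with cb; [lra|].
            unfold Rdiv. rewrite Rmult_assoc, Rinv_l by lra. nra.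
          - unfold L in hge. nra. }
        assert (hI : F (t - L) <= C * exp (- (c * (t - L)))).
        { apply IH; [lra|]. rewrite !S_INR in h2. rewrite !S_INR. nra. }
        eapply Rle_trans; [exact hr'|].
        replace (C' * F (t - L) / s0) with (F (t - L) / 2) by (unfold s0; field; lra).
        replace (C * exp (- (c * t))) with (C * exp (- (c * (t - L))) / 2).
        * lra.
        * replace (- (c * (t - L))) with (- (c * t) + c * L) by ring.
          rewrite exp_plus, hcL. field. }
  intros t ht.
  destruct (nat_above ((t - cb) / L)) as [n hn].
  { apply Rmult_le_pos; [lra|left; apply Rinv_0_lt_compat; lra]. }
  apply (key n t ht). rewrite S_INR.
  apply Rmult_lt_compat_r with (r := L) in hn; [|lra].
  unfold Rdiv in hn. rewrite Rmult_assoc, Rinv_l in hn by lra. nra.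
Qed.
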